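(* Let $G$ be an almost hypocyclic graph with exceptional vertex $w$. Then for every partition $(W,X)$ of $V(G)$ with $|W| > 1$ and $|X| > 1$, we have $p(G[W]) < |X|$ and $k(G[W]) < |X|$.
   Context: All graphs are finite, undirected, connected (except where stated, e.g. induced subgraphs), without loops or multiple edges. A graph is hamiltonian if it has a cycle through all its vertices. A graph $G$ is almost hypocyclic if there exists a vertex $w$ (the exceptional vertex) such that $G - w$ is non-hamiltonian but $G - v$ is hamiltonian for every vertex $v \neq w$. $G[S]$ denotes the subgraph induced by $S \subseteq V(G)$. For a possibly disconnected graph $G$: $p(G)$ is the minimum number of pairwise vertex-disjoint paths (a single vertex counts as a path) needed to cover all vertices of $G$; $V_1(G)$ is the set of vertices of degree $1$ in $G$; $I(G)$ is the set of all isolated vertices and isolated edges of $G$ (i.e. components isomorphic to $K_1$ or $K_2$), and $|I(G)|$ is their number; and $k(G)$ is defined recursively by $k(G) = 0$ if $G$ is empty, $k(G) = \max\{1, \lceil |V_1(G)|/2 \rceil\}$ if $I(G) = \emptyset$ but $G$ is not empty, and $k(G) = |I(G)| + k(G - I(G))$ otherwise, where $G - I(G)$ is obtained by removing the vertices of these isolated vertices and edges. *)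

(* Defs.v *)
(* Induced subgraphs G[S] are
   represented by their vertex set S : {set T} (edges = e restricted to S). *)
From mathcomp Require Import all_boot.
Set Implicit Arguments. Unset Strict Implicit. Unset Printing Implicit Defensive.

Section Graphs.
Variable T : finType.
Variable e : rel T.

Definition simple_graph : Prop := symmetric e /\ irreflexive e.

Definition connected_graph : Prop := forall x y : T, connect e x y.

Definition hamiltonian_on (S : {set T}) : Prop :=
  exists s : seq T, [/\ uniq s, [set x in s] = S, 3 <= size s & cycle e s].

Definition almost_hypocyclic_at (w : T) : Prop :=
  ~ hamiltonian_on [set~ w] /\ (forall v, v != w -> hamiltonian_on [set~ v]).

Definition is_path_in (S : {set T}) (p : seq T) : bool :=
  match p with
  | [::] => false
  | x :: q => [&& uniq p, all (fun y => y \in S) p & path e x q]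
  end.

Definition path_cover (S : {set T}) (P : seq (seq T)) : Prop :=
  [/\ all (is_path_in S) P, uniq (flatten P) & forall x, x \in S -> x \in flatten P].

Definition path_cover_number (S : {set T}) (n : nat) : Prop :=
  (exists P, path_cover S P /\ size P = n) /\
  (forall P, path_cover S P -> n <= size P).

Definition deg_in (S : {set T}) (v : T) : nat := #|[set u in S | e v u]|.

Definition V1 (S : {set T}) : {set T} := [set v in S | deg_in S v == 1].

(* I(G[S]): the components of G[S] isomorphic to K1 or K2, as vertex sets *)
Definition Icomps (S : {set T}) : {set {set T}} :=
  [set C : {set T} |
     [exists v, (v \in S) && (deg_in S v == 0) && (C == [set v])] ||
     [exists u, exists v, [&& u \in S, v \in S, e u v, deg_in S u == 1,
                              deg_in S v == 1 & C == [set u; v]]]].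

(* k(G[S]) by recursion; the fuel is #|S| and each recursive step removes at
   least one vertex, so the fuel never runs out. *)
Fixpoint k_fuel (n : nat) (S : {set T}) : nat :=
  match n with
  | 0 => 0
  | n'.+1 =>
      if S == set0 then 0
      else if Icomps S == set0 then maxn 1 (uphalf #|V1 S|)
      else #|Icomps S| + k_fuel n' (S :\: cover (Icomps S))
  end.

Definition k_num (S : {set T}) : nat := k_fuel #|S| S.
End Graphs.

(* Main.v *)
Require Import Defs.
From mathcomp Require Import all_boot zify.
From Stdlib Require Import Lia.
Set Implicit Arguments. Unset Strict Implicit. Unset Printing Implicit Defensive.

Section S.
Variable T : finType.
Variable e : rel T.

Lemma segs (a : pred T) t : sorted e t -> exists P : seq (seq T),
  [/\ all (fun p => (p != [::]) && sorted e p) P, flatten P = filter a t &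
     size P + ~~ (if t is x :: _ then a x else false) <= count (predC a) t + 1].
Proof.
elim: t => [|x t IH]; first by exists [::].
move=> H; have St : sorted e t by apply: path_sorted H.
case: (IH St) => P [HP HF HS].
case ax: (a x); last first.
  exists P; split => //=; first by rewrite ax.
  rewrite ax /=; move: HS; case: t {IH H St HF} => [|y t] /=; [lia | case: (a y) => /=; lia].
case: t H St IH HF HS => [|y t] H St _ HF HS.
  by exists [:: [:: x]]; rewrite /= ax.
case ay: (a y).
  case: P HP HF HS => [|[|z q] P'] //=; first by rewrite ay.
  move=> /andP[Sq HP']; rewrite ay => -[Ezy Hq] HS; subst.
  exists ((x :: y :: q) :: P'); split => //=.
  - by rewrite Sq HP' !andbT; case/andP: H.
  - by rewrite ax Hq.
  - by move: HS => /=; lia.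
exists ([:: x] :: P); split => //=.
- by rewrite ax HF /= ay.
- by rewrite ax ay in HS *; move: HS => /=; lia.
Qed.

Hypothesis sym : symmetric e.

Lemma deg1_nbr S v u : deg_in e S v = 1 -> u \in S -> e v u ->
  [set y in S | e v y] = [set u].
Proof.
rewrite /deg_in => /eqP/cards1P[z Hz] uS evu.
have : u \in [set y in S | e v y] by rewrite inE uS evu.
by rewrite Hz inE => /eqP ->.
Qed.

Lemma deg0_nbr S v : deg_in e S v = 0 -> [set y in S | e v y] = set0.
Proof. exact: cards0_eq. Qed.

Lemma comp_nbr S C x : C \in Icomps e S -> x \in C ->
  x \in S /\ C = x |: [set y in S | e x y].
Proof.
rewrite inE => /orP[/existsP[v /andP[/andP[vS /eqP d0] /eqP ->]]|].
  by rewrite inE => /eqP ->; rewrite deg0_nbr // setU0.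
case/existsP=> u /existsP[v /and5P[uS vS euv /eqP du /andP[/eqP dv /eqP ->]]].
rewrite !inE => /orP[/eqP ->|/eqP ->].
  by rewrite (deg1_nbr du vS euv).
by rewrite (deg1_nbr dv uS) 1?sym // setUC.
Qed.

Lemma comp_ne S C : C \in Icomps e S -> exists x, x \in C.
Proof.
rewrite inE => /orP[/existsP[v /andP[_ /eqP ->]]|]; first by exists v; rewrite inE.
case/existsP=> u /existsP[v /and5P[_ _ _ _ /andP[_ /eqP ->]]].
by exists u; rewrite !inE eqxx.
Qed.

Lemma comp_closed S C y z : C \in Icomps e S -> y \in C -> z \in S -> e y z ->
  z \in C.
Proof.
move=> HC yC zS eyz; have [_ ->] := comp_nbr HC yC.
by rewrite !inE zS eyz orbT.
Qed.

Lemma path_in_comp S C p : C \in Icomps e S -> sorted e p ->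
  all (fun z => z \in S) p -> has (fun z => z \in C) p -> all (fun z => z \in C) p.
Proof.
move=> HC; elim: p => [|x q IH] //= Hs /andP[xS aS] Hh.
have Sq : sorted e q := path_sorted Hs.
case: q IH Hs Sq aS Hh => [|y q] IH Hs Sq aS Hh.
  by move: Hh; rewrite /= !orbF andbT.
case/andP: Hs => exy _; move: aS => /= /andP[yS aS].
case xC: (x \in C) => /=.
  have yC : y \in C by apply: comp_closed xC yS exy.
  by apply: IH => //=; rewrite ?yS ?aS ?yC.
move: Hh; rewrite xC /= => Hh.
have := IH Sq; rewrite /= yS aS => /(_ isT Hh) /andP[yC _].
by rewrite (comp_closed HC yC xS) // sym in xC.
Qed.

Lemma sorted_mid s1 x y s2 : sorted e (s1 ++ [:: x, y & s2]) -> e x y.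
Proof.
elim: s1 => [|z s1 IH] /=; first by case/andP.
by move=> H; apply: IH; apply: path_sorted H.
Qed.

Lemma endpoint (S : {set T}) p v : uniq p -> sorted e p -> all (fun z => z \in S) p ->
  v \in p -> deg_in e S v = 1 -> v = head v p \/ v = last v p.
Proof.
move=> Up Sp Ap vp dv; move: Up Sp Ap; case/splitPr: vp => p1 p2.
case/lastP: p1 => [|p1 a] Up Sp Ap; first by left.
case: p2 Up Sp Ap => [|b p2] Up Sp Ap; first by right; rewrite last_cat last_rcons.
exfalso.
have eav : e a v by apply: (@sorted_mid p1 _ _ (b :: p2)); rewrite -cat_rcons.
have evb : e v b by apply: (@sorted_mid (rcons p1 a) _ _ p2).
have nab : a != b.
  move: Up; rewrite cat_rcons cat_uniq => /and3P[_ _] /= /andP[].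
  by rewrite !inE negb_or => /andP[_]; rewrite negb_or => /andP[].
have aS : a \in S by apply: (allP Ap); rewrite mem_cat mem_rcons inE eqxx.
have bS : b \in S by apply: (allP Ap); rewrite mem_cat !inE eqxx !orbT.
have : #|[set a; b]| <= deg_in e S v.
  apply: subset_leq_card; apply/subsetP => z; rewrite !inE.
  by case/orP=> /eqP ->; rewrite ?aS ?bS ?evb // sym eav.
by rewrite cards2 nab dv.
Qed.


Lemma k_le n (S : {set T}) P : path_cover e S P -> k_fuel e n S <= size P.
Proof.
elim: n S P => [|n IH] S P [HP Hu Hc] //=.
case: ifP => S0 //.
case: ifP => I0.
  case/set0Pn: (negbT S0) => x0 x0S.
  rewrite geq_max; apply/andP; split.
    by have := Hc x0 x0S; case: P {HP Hu Hc}.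
  rewrite leq_uphalf_double.
  pose Ends := [seq head x0 p | p <- P] ++ [seq last x0 p | p <- P].
  have -> : (size P).*2 = size Ends by rewrite size_cat !size_map addnn.
  apply: leq_trans (card_size Ends); apply: subset_leq_card.
  apply/subsetP => v; rewrite inE => /andP[vS /eqP d1].
  have /flattenP[p pP vp] := Hc v vS.
  move: (allP HP p pP); case: p pP vp => [|y q] // pP vp /= /and3P[Uq Aq Pq].
  have [] := @endpoint S (y :: q) v Uq Pq Aq vp d1 => /= ->.
    by rewrite mem_cat; apply/orP; left; apply/mapP; exists (y :: q).
  by rewrite mem_cat; apply/orP; right; apply/mapP; exists (y :: q).
set I := Icomps e S.
pose a := fun p : seq T => has (fun z => z \in cover I) p.
rewrite -(count_predC a P) -!size_filter; apply: leq_add.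
  pose g := fun p : seq T => if p is y :: _ then odflt set0 [pick C in I | y \in C] else set0.
  rewrite -(size_map g); apply: (leq_trans _ (card_size _)).
  apply: subset_leq_card; apply/subsetP => C CI.
  have [x xC] := comp_ne CI.
  have [xS _] := comp_nbr CI xC.
  have /flattenP[p pP xp] := Hc x xS.
  move: (allP HP p pP); case: p pP xp => [|y q] // pP xp /= /and3P[Uq Aq Pq].
  have hC : has (fun z => z \in C) (y :: q) by apply/hasP; exists x.
  have /= /andP[yC _] := @path_in_comp S C (_ :: q) CI Pq Aq hC.
  apply/mapP; exists (y :: q).
    rewrite mem_filter pP andbT; apply/hasP; exists x => //.
    by rewrite /cover; apply/bigcupP; exists C.
  rewrite /g; case: pickP => [C' /andP[C'I yC'] | H] /=.
    by have [_ ->] := comp_nbr C'I yC'; have [_ ->] := comp_nbr CI yC.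
  by have := H C; rewrite CI yC.
apply: IH; split.
- apply/allP => p; rewrite mem_filter => /andP[np pP].
  move: (allP HP p pP); case: p np pP => [|y q] // np _.
  rewrite /is_path_in => /and3P[Uq Aq Pq].
  rewrite Uq Pq andbT; apply/allP => z zp; rewrite inE (allP Aq z zp) andbT.
  by apply: contra np => zc; rewrite /a; apply/hasP; exists z.
- have pe : perm_eq (filter a P ++ filter (predC a) P) P by rewrite perm_filterC.
  have := perm_uniq (perm_flatten pe); rewrite flatten_cat Hu cat_uniq.
  by case/and3P.
- move=> z; rewrite inE => /andP[zc zS].
  have /flattenP[p pP zp] := Hc z zS.
  apply/flattenP; exists p => //; rewrite mem_filter pP andbT /=.
  apply/negP => /hasP[y yp]; rewrite /cover => /bigcupP[C CI yC].
  move: (allP HP p pP); case: p pP zp yp => [|x q] // pP zp yp /= /and3P[Uq Aq Pq].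
  have hC : has (fun z => z \in C) (x :: q) by apply/hasP; exists y.
  have := allP (@path_in_comp S C (_ :: q) CI Pq Aq hC) z zp => zC.
  by move/negP: zc; apply; apply/bigcupP; exists C.
Qed.


Lemma uniq_flatten_mem (P : seq (seq T)) p : p \in P -> uniq (flatten P) -> uniq p.
Proof.
case/splitPr=> P1 P2; rewrite flatten_cat cat_uniq => /and3P[_ _] /=.
by rewrite cat_uniq => /andP[].
Qed.

End S.

Theorem lemma3p1 (T : finType) (e : rel T) (w : T) :
  simple_graph e -> connected_graph e -> almost_hypocyclic_at e w ->
  forall W X : {set T},
    W :&: X = set0 -> W :|: X = [set: T] -> 1 < #|W| -> 1 < #|X| ->
    (forall n, path_cover_number e W n -> n < #|X|) /\ k_num e W < #|X|.
Proof.
move=> [sym _] _ [_ Hham] W X WX0 WXT W1 X1.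
have nWX : forall z, z \in W -> z \in X -> False.
  move=> z zW zX; have : z \in W :&: X by rewrite inE zW zX.
  by rewrite WX0 inE.
have WorX : forall z, z \notin W -> z \in X.
  move=> z zW; have : z \in W :|: X by rewrite WXT inE.
  by rewrite inE (negbTE zW).
have [v [x0 [vX x0X x0v vw]]] : exists v x0, [/\ v \in X, x0 \in X, x0 != v & v != w].
  case/card_gt1P: X1 => a [b [aX bX ab]].
  case aw: (a == w).
    by exists b, a; split => //; rewrite -(eqP aw) eq_sym.
  by exists a, b; split => //; rewrite ?aw // eq_sym.
have [s [Us Es Ss Cs]] := Hham v vw.
have Ms : forall y, (y \in s) = (y != v).
  by move=> y; rewrite -in_setC1 -Es inE.
have x0s : x0 \in s by rewrite Ms.
case/splitPr: x0s Us Es Cs Ms => p1 p2 Us Es Cs Ms.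
rewrite -(rot_cycle (size p1)) rot_size_cat in Cs.
rewrite -(rot_uniq (size p1)) rot_size_cat in Us.
have Mt : forall y, (y \in x0 :: (p2 ++ p1)) = (y != v).
  by move=> y; rewrite -Ms -(mem_rot (size p1) (p1 ++ x0 :: p2)) rot_size_cat.
move: Cs Us Mt; rewrite /=; set t := p2 ++ p1 => Cs Us Mt.
have St : sorted e t by move: Cs; rewrite rcons_path => /andP[/path_sorted].
have [P [HP HF HS]] := segs (fun y => y \in W) St.
have PC : path_cover e W P.
  split.
  - apply/allP => p pP; have /andP[pn ps] := allP HP p pP.
    case: p pn ps pP => [|y q] // _ ps pP.
    rewrite /is_path_in (ps : path e y q) andbT.
    have Uf : uniq (flatten P) by rewrite HF filter_uniq //; case/andP: Us.
    rewrite (uniq_flatten_mem pP Uf); apply/allP => z zp.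
    have : z \in flatten P by apply/flattenP; exists (y :: q).
    by rewrite HF mem_filter => /andP[].
  - by rewrite HF filter_uniq //; case/andP: Us.
  - move=> z zW; rewrite HF mem_filter zW /=.
    have : z \in x0 :: t by rewrite Mt; apply/eqP => zv; apply: (nWX z) => //; rewrite zv.
    rewrite inE => /orP[/eqP zx0|] //.
    by exfalso; apply: (nWX z) => //; rewrite zx0.
have Hsz : size P < #|X|.
  have Hc : count (predC (fun y => y \in W)) t <= #|X :\ v :\ x0|.
    rewrite -size_filter cardE; apply: uniq_leq_size.
      by rewrite filter_uniq //; case/andP: Us.
    move=> z; rewrite mem_filter mem_enum => /andP[zW zt].
    have := Mt z; rewrite inE zt orbT => /esym zv.
    have zx0 : z != x0 by apply: contraNneq (proj1 (andP Us)) => <-.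
    by rewrite !inE zx0 zv WorX.
  have H2 : #|X| = (#|X :\ v :\ x0|).+2.
    rewrite (cardsD1 v) vX (cardsD1 x0 (X :\ v)) !inE x0v x0X.
    by rewrite add1n add1n.
  move: HS Hc; rewrite H2; lia.
split.
  by move=> n [_ Hmin]; apply: leq_ltn_trans (Hmin P PC) Hsz.
rewrite /k_num; apply: leq_ltn_trans Hsz; exact: k_le.
Qed.
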